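(* For every composition $I=(i_1,\dots,i_r)$, \[ \mathrm{PT}^A_{(1,i_1,i_2,\dots,i_r)}(q)=\mathrm{PT}^A_I(q), \qquad \mathrm{PT}^A_{(1+i_1,i_2,\dots,i_r)}(q)=[r]_q\,\mathrm{PT}^A_I(q)+\sum_{k=1}^{r-1}q^{k-1}\,\mathrm{PT}^A_{(i_1,\dots,i_{k-1},i_k+i_{k+1},i_{k+2},\dots,i_r)}(q). \]
   Context: $[m]_q=1+q+\dots+q^{m-1}$. Let $k\ge1$ and let $\lambda$ be a Young diagram with exactly $k$ rows (rows of length $0$ allowed) and exactly $n-k$ nonempty columns, drawn in French convention (rows left-justified, longest row at the bottom). Encode $\lambda$ by the composition $I=(i_1,\dots,i_k)$ of $n$ where, for $1\le t\le k$, $i_t-1$ is the number of columns of length $k-t+1$ (a bijection onto compositions of $n$ with $k$ parts). A (type A) permutation tableau of shape $\lambda$ is a filling of the boxes with $0$'s and $1$'s such that (1) every column contains at least one $1$, and (2) no box containing a $0$ has both a $1$ below it in the same column and a $1$ to its left in the same row. Its rank is (number of $1$'s) minus (number of columns). $\mathrm{PT}^A_I(q)=\sum_T q^{\mathrm{rank}(T)}$ over permutation tableaux $T$ of the shape encoded by $I$. *)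

(* Defs.v *)
From mathcomp Require Import all_boot all_order all_algebra.
Set Implicit Arguments. Unset Strict Implicit. Unset Printing Implicit Defensive.
Import GRing.Theory.

Definition composition (I : seq nat) : bool := all (fun i => 0 < i)%N I.

(* Shape encoded by I = (i_1,...,i_k): k rows, and for t = 1..k exactly
   i_t - 1 columns of length k - t + 1.  Columns are listed from left to right
   in weakly decreasing length (French convention, left-justified rows,
   longest row at the bottom).  Below, with 0-indexed t, column length k - t. *)
Definition colLens (I : seq nat) : seq nat :=
  flatten [seq nseq (nth 0 I t).-1 (size I - t) | t <- iota 0 (size I)].

Definition nrows (I : seq nat) : nat := size I.
Definition ncols (I : seq nat) : nat := size (colLens I).

(* Rows are 0-indexed from the bottom, columns 0-indexed from the left.
   Box (r, c) belongs to the diagram iff r < length of column c. *)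
Definition inShape (I : seq nat) (r c : nat) : bool := (r < nth 0 (colLens I) c)%N.

(* A filling is a 0/1 function on all cells of the k x (n-k) rectangle
   (true = 1); cells outside the diagram are required to be 0 (false), so
   fillings of the diagram correspond bijectively to such functions. *)
Definition filling (I : seq nat) := {ffun 'I_(nrows I) * 'I_(ncols I) -> bool}.

Definition isPT (I : seq nat) (T : filling I) : bool :=
  [&& [forall x : 'I_(nrows I) * 'I_(ncols I),
         ~~ inShape I x.1 x.2 ==> ~~ T x],
      [forall c : 'I_(ncols I), exists r : 'I_(nrows I), T (r, c)] &
      (* (2) no 0 has both a 1 below it in its column and a 1 to its left in its row *)
      [forall x : 'I_(nrows I) * 'I_(ncols I),
         (inShape I x.1 x.2 && ~~ T x) ==>
         ~~ ([exists r : 'I_(nrows I), (r < x.1)%N && T (r, x.2)] &&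
             [exists c : 'I_(ncols I), (c < x.2)%N && T (x.1, c)])]].

Definition ptRank (I : seq nat) (T : filling I) : nat :=
  (#|[set x | T x]| - ncols I)%N.

Definition PT (I : seq nat) : {poly int} :=
  (\sum_(T : filling I | isPT T) 'X^(ptRank T))%R.

Definition qint (m : nat) : {poly int} := (\sum_(j < m) 'X^j)%R.

(* (i_1,...,i_{k-1}, i_k + i_{k+1}, i_{k+2},...,i_r) with j = k-1 0-indexed *)
Definition mergeAt (I : seq nat) (j : nat) : seq nat :=
  take j I ++ (nth 0 I j + nth 0 I j.+1)%N :: drop j.+2 I.

(* Main.v *)
Require Import Defs.
From mathcomp Require Import all_boot all_order all_algebra.
From mathcomp Require Import zify ring.
Set Implicit Arguments. Unset Strict Implicit. Unset Printing Implicit Defensive.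
Import GRing.Theory.


Definition validg k m (len : nat -> nat) (T : {ffun 'I_k * 'I_m -> bool}) : bool :=
  [&& [forall x : 'I_k * 'I_m, ~~ (x.1 < len x.2)%N ==> ~~ T x],
      [forall c : 'I_m, exists r : 'I_k, T (r, c)] &
      [forall x : 'I_k * 'I_m,
         ((x.1 < len x.2)%N && ~~ T x) ==>
         ~~ ([exists r : 'I_k, (r < x.1)%N && T (r, x.2)] &&
             [exists c : 'I_m, (c < x.2)%N && T (x.1, c)])]].

Definition rankg k m (T : {ffun 'I_k * 'I_m -> bool}) : nat := (#|[set x | T x]| - m)%N.

Definition Zg k m len : {poly int} :=
  (\sum_(T : {ffun 'I_k * 'I_m -> bool} | validg len T) 'X^(rankg T))%R.

Lemma PT_Zg I : PT I = Zg (nrows I) (ncols I) (nth 0 (colLens I)).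
Proof. by []. Qed.

Definition tf k m (T : {ffun 'I_k * 'I_m -> bool}) (r c : nat) : bool :=
  if (insub r : option 'I_k) is Some i then
    if (insub c : option 'I_m) is Some j then T (i, j) else false
  else false.

Lemma tf_ord k m (T : {ffun 'I_k * 'I_m -> bool}) (i : 'I_k) (j : 'I_m) :
  tf T i j = T (i, j).
Proof. by rewrite /tf !valK. Qed.

Lemma tf_range k m (T : {ffun 'I_k * 'I_m -> bool}) r c :
  tf T r c -> (r < k) /\ (c < m).
Proof.
rewrite /tf; case: insubP => // i ri _; case: insubP => // j cj _ _; by [].
Qed.

Lemma tf_ffun k m (g : nat -> nat -> bool) r c :
  tf [ffun y : 'I_k * 'I_m => g y.1 y.2] r c = [&& r < k, c < m & g r c].
Proof.
rewrite /tf; case: insubP => [i ri Ei|/negbTE->//]; case: insubP => [j cj Ej|/negbTE->].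
- by rewrite ffunE /= Ei Ej ri cj.
- by rewrite ri andbF.
Qed.

Lemma tf_inj k m (T1 T2 : {ffun 'I_k * 'I_m -> bool}) :
  (forall r c, tf T1 r c = tf T2 r c) -> T1 = T2.
Proof. move=> H; apply/ffunP => -[i j]; by rewrite -!tf_ord H. Qed.

Definition VN k m (len : nat -> nat) (f : nat -> nat -> bool) : Prop :=
  [/\ (forall r c, f r c -> [&& r < k, c < m & r < len c]),
      (forall c, c < m -> exists2 r, r < k & f r c) &
      (forall r c r' c', r < k -> c < m -> r < len c -> ~~ f r c ->
          r' < r -> f r' c -> c' < c -> f r c' -> False)].

Lemma validP k m len (T : {ffun 'I_k * 'I_m -> bool}) :
  validg len T <-> VN k m len (tf T).
Proof.
split.
- case/and3P=> /forallP H1 /forallP H2 /forallP H3; split.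
  + move=> r c frc; have [rk cm] := tf_range frc.
    have := H1 (Ordinal rk, Ordinal cm); rewrite /= -tf_ord /= frc rk cm /=.
    by case: (r < len c).
  + move=> c cm; case/existsP: (H2 (Ordinal cm)) => i Ti.
    by exists i => //; rewrite (tf_ord T i (Ordinal cm)).
  + move=> r c r' c' rk cm rl nf r'r f' c'c f''.
    have := H3 (Ordinal rk, Ordinal cm); rewrite /= rl -tf_ord nf /=.
    case/nandP => /existsP; apply.
    * exists (Ordinal (ltn_trans r'r rk)) => /=; by rewrite r'r -tf_ord.
    * exists (Ordinal (ltn_trans c'c cm)) => /=; by rewrite c'c -tf_ord.
- case=> H1 H2 H3; apply/and3P; split.
  + apply/forallP => -[i j] /=; apply/implyP => nl; apply/negP => Tij.
    by have := H1 i j; rewrite tf_ord Tij (negbTE nl) !andbF => /(_ isT).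
  + apply/forallP => j; have [r rk fr] := H2 j (ltn_ord j).
    by apply/existsP; exists (Ordinal rk); rewrite -tf_ord.
  + apply/forallP => -[i j] /=; apply/implyP => /andP[rl nT].
    apply/negP => /andP[/existsP[i' /andP[i'i Ti']] /existsP[j' /andP[j'j Tj']]].
    apply: (H3 i j i' j') => //; by rewrite tf_ord.
Qed.


Definition ones k m (f : nat -> nat -> bool) : nat := \sum_(i < k) \sum_(j < m) f i j.

Lemma onesE k m (T : {ffun 'I_k * 'I_m -> bool}) : #|[set x | T x]| = ones k m (tf T).
Proof.
rewrite /ones; transitivity (\sum_(i < k) \sum_(j < m) nat_of_bool (T (i, j))); last first.
  by apply: eq_bigr => i _; apply: eq_bigr => j _; rewrite tf_ord.
rewrite pair_big /= -sum1_card big_mkcond /=.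
apply: eq_bigr => -[i j] _; rewrite inE /=; by case: (T (i, j)).
Qed.

Lemma ones_ge k m len f : VN k m len f -> m <= ones k m f.
Proof.
case=> _ H2 _; rewrite /ones exchange_big /=.
rewrite -[X in X <= _](card_ord m) -sum1_card.
apply: leq_sum => j _; have [r rk fr] := H2 j (ltn_ord j).
rewrite (bigD1 (Ordinal rk)) //= fr; exact: leq_addr.
Qed.

Lemma sum_bij (A B : finType) (R : Type) (idx : R) (op : Monoid.com_law idx)
   (P : pred A) (Q : pred B) (e : B -> A) (r : A -> B) (F : A -> R) (G : B -> R) :
  (forall b, Q b -> P (e b)) ->
  (forall a, P a -> Q (r a) /\ e (r a) = a) ->
  (forall b, Q b -> r (e b) = b) ->
  (forall b, Q b -> F (e b) = G b) ->
  \big[op/idx]_(a | P a) F a = \big[op/idx]_(b | Q b) G b.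
Proof.
move=> H1 H2 H3 H4.
rewrite (reindex_onto e r) => [|a Pa]; last by case: (H2 a Pa).
apply: eq_big => [b|b /andP[Pb]].
- apply/idP/idP => [/andP[Pe /eqP E]|Qb]; last by rewrite H1 // H3 // eqxx.
  by have [+ _] := H2 _ Pe; rewrite E.
- by move=> /eqP E; apply: H4; have [+ _] := H2 _ Pb; rewrite E.
Qed.


Definition mk k m (g : nat -> nat -> bool) : {ffun 'I_k * 'I_m -> bool} :=
  [ffun y => g (nat_of_ord y.1) (nat_of_ord y.2)].

Lemma tf_mk k m g r c : tf (mk k m g) r c = [&& r < k, c < m & g r c].
Proof. exact: tf_ffun. Qed.

Lemma tf_out k m (T : {ffun 'I_k * 'I_m -> bool}) r c :
  ~~ ((r < k) && (c < m)) -> tf T r c = false.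
Proof. by apply: contraNF => /tf_range[-> ->]. Qed.

Lemma VN_ext k m len f g : (forall r c, f r c = g r c) -> VN k m len f -> VN k m len g.
Proof.
move=> E [H1 H2 H3]; split.
- by move=> r c; rewrite -E; apply: H1.
- by move=> c /H2[r rk fr]; exists r; rewrite // -E.
- move=> r c r' c'; rewrite -!E; exact: H3.
Qed.

Lemma bumpE h a : bump h a = if a < h then a else a.+1.
Proof. rewrite /bump; case: ltnP => /= ha; lia. Qed.

Lemma sum_bump (R : Type) (idx : R) (op : Monoid.com_law idx) k r0 (F : nat -> R) :
  r0 <= k ->
  \big[op/idx]_(i < k.+1) F i = op (F r0) (\big[op/idx]_(i < k) F (bump r0 i)).
Proof.
move=> r0k; rewrite (bigD1_ord (Ordinal (r0k : r0 < k.+1))) //=.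
Qed.

Definition delrowf r0 (len : nat -> nat) j := if r0 < len j then (len j).-1 else len j.

Section RowDel.
Variables (k n : nat) (len : nat -> nat) (r0 : nat).
Hypothesis r0k : r0 <= k.

Let len' := delrowf r0 len.
Let ee (T' : {ffun 'I_k * 'I_n -> bool}) : {ffun 'I_k.+1 * 'I_n -> bool} :=
  mk k.+1 n (fun r c => if r < r0 then tf T' r c else if r == r0 then false else tf T' r.-1 c).
Let rr (T : {ffun 'I_k.+1 * 'I_n -> bool}) : {ffun 'I_k * 'I_n -> bool} :=
  mk k n (fun r c => tf T (bump r0 r) c).

Lemma rr_ee T' : rr (ee T') = T'.
Proof.
apply: tf_inj => a c; rewrite !tf_mk bumpE.
case: (boolP ((a < k) && (c < n))) => [/andP[ak cn]|H]; last first.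
  by rewrite [RHS]tf_out //; move: H; case: (a < k); case: (c < n).
rewrite cn /=; case: (ltnP a r0) => ar.
  by rewrite ak ar ltnS (ltnW ak).
have -> : (a.+1 < r0) = false by lia.
have -> : (a.+1 == r0) = false by lia.
by rewrite ak ltnS ak.
Qed.

Definition Gd (f : nat -> nat -> bool) r c :=
  if r < r0 then f r c else if r == r0 then false else f r.-1 c.

Lemma Gd_bump f i c : Gd f (bump r0 i) c = f i c.
Proof.
rewrite /Gd bumpE; case: (ltnP i r0) => h; first by rewrite h.
have -> : (i.+1 < r0) = false by lia.
by have -> : (i.+1 == r0) = false by lia.
Qed.

Lemma Gd_inv f r c : Gd f r c -> r != r0 /\ r = bump r0 (if r < r0 then r else r.-1).
Proof.
rewrite /Gd bumpE; case: ltngtP => // h _; split; try lia.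
- by rewrite h.
- have -> : (r.-1 < r0) = false by lia. lia.
Qed.

Lemma tf_ee T' r c : tf (ee T') r c = Gd (tf T') r c.
Proof.
rewrite tf_mk -/(Gd (tf T') r c).
case E: (Gd (tf T') r c); last by rewrite !andbF.
have [nr0 Er] := Gd_inv E.
move: E; rewrite /Gd; case: ltngtP => // h; move/tf_range => [rk cn]; rewrite cn andbT; lia.
Qed.

Lemma rd_fwd f : VN k n len' f -> VN k.+1 n len (Gd f).
Proof.
case=> H1 H2 H3; split.
- move=> r c E; have [nr0 Er] := Gd_inv E; move: (if _ then _ else _) Er => i Er; subst r.
  move: E; rewrite Gd_bump.
  move/H1 => /and3P[rk cn rl]; rewrite cn /=; move: rl; rewrite /len' /delrowf bumpE.
  by case: ifP => h1; case: ifP => h2; lia.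
- move=> c /H2[r rk fr]; exists (bump r0 r); last by rewrite Gd_bump.
  rewrite bumpE; case: ifP => h0; lia.
- move=> r c r' c' rk cn rl nG r'r Gr' c'c Grc'.
  have [nr0 Er] := Gd_inv Grc'; have [nr0' Er'] := Gd_inv Gr'.
  move: (if r < r0 then _ else _) Er => i Er; move: (if r' < r0 then _ else _) Er' => i' Er'.
  subst r r'; move: nG Gr' Grc'; rewrite !Gd_bump => nG Gr' Grc'.
  apply: (H3 i c i' c') => //.
  + move: rk; rewrite bumpE; case: ifP => h0; lia.
  + move: rl; rewrite /len' /delrowf bumpE; by case: ifP => h1; case: ifP => h2; lia.
  + move: r'r; rewrite !bumpE; by case: ifP => h1; case: ifP => h2; lia.
Qed.

Lemma rd_bwd f : VN k.+1 n len f -> (forall c, f r0 c = false) ->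
  VN k n len' (fun i c => f (bump r0 i) c) /\ (forall r c, Gd (fun i c => f (bump r0 i) c) r c = f r c).
Proof.
case=> H1 H2 H3 Z; split; first split.
- move=> i c /H1 /and3P[rk cn rl]; rewrite cn /=; move: rk rl; rewrite /len' /delrowf bumpE.
  by case: ifP => h1; case: ifP => h2; lia.
- move=> c /H2[r rk fr].
  have nr : r != r0 by apply: contraTneq fr => ->; rewrite Z.
  exists (if r < r0 then r else r.-1).
  + case: ifP => h; lia.
  + rewrite bumpE; case: (ltnP r r0) => h; first by rewrite h.
    have -> : (r.-1 < r0) = false by lia.
    by have -> : r.-1.+1 = r by lia.
- move=> i c i' c' ik cn il nf i'i f' c'c f''.
  apply: (H3 (bump r0 i) c (bump r0 i') c') => //.
  + rewrite bumpE; case: ifP => h0; lia.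
  + move: il; rewrite /len' /delrowf bumpE; by case: ifP => h1; case: ifP => h2; lia.
  + rewrite !bumpE; by case: ifP => h1; case: ifP => h2; lia.
- move=> r c; rewrite /Gd bumpE; case: ltngtP => h //.
  + rewrite bumpE; have -> : (r.-1 < r0) = false by lia. by have -> : r.-1.+1 = r by lia.
  + by rewrite h Z.
Qed.

Lemma rowdel :
  (\sum_(T : {ffun 'I_k.+1 * 'I_n -> bool} | validg len T && [forall j : 'I_n, ~~ tf T r0 j])
     'X^(rankg T))%R = Zg k n len'.
Proof.
rewrite /Zg; apply: (@sum_bij _ _ _ _ _ _ _ ee rr).
- move=> T' /validP V; apply/andP; split.
  + apply/validP; apply: VN_ext (rd_fwd V) => r c; by rewrite tf_ee.
  + apply/forallP => j; by rewrite tf_ee /Gd ltnn eqxx.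
- move=> T /andP[/validP V /forallP Z].
  have Z' : forall c, tf T r0 c = false.
    move=> c; case: (boolP (c < n)) => cn; first by apply/negbTE; exact: (Z (Ordinal cn)).
    by rewrite tf_out // negb_and cn orbT.
  have [V' E] := rd_bwd V Z'.
  have Er : forall i c, tf T (bump r0 i) c = tf (rr T) i c.
    move=> i c; rewrite tf_mk; case E1: (tf T (bump r0 i) c); last by rewrite !andbF.
    have [rk cn] := tf_range E1; rewrite cn /=; move: rk; rewrite bumpE; case: ifP => h0; lia.
  split; first by apply/validP; exact: VN_ext V'.
  apply: tf_inj => r c; rewrite tf_ee -E /Gd; by rewrite !Er.
- move=> b _; exact: rr_ee.
- move=> T' _; rewrite /rankg !onesE /ones; congr ('X^(_ - _))%R.
  rewrite (@sum_bump _ _ _ k r0 (fun i => \sum_(j < n) tf (ee T') i j) r0k) big1 ?add0n.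
  + by apply: eq_bigr => i _; apply: eq_bigr => j _; rewrite tf_ee Gd_bump.
  + by move=> j _; rewrite tf_ee /Gd ltnn eqxx.
Qed.
End RowDel.


Lemma sum_eq1 n c0 (b : bool) : c0 < n -> \sum_(c < n) (b && (c == c0 :> nat)) = b.
Proof.
move=> cn; case: b; last by rewrite big1.
rewrite (bigD1 (Ordinal cn)) //= eqxx big1 // => j nj.
apply/eqP; rewrite eqb0 /=; apply: contra nj => /eqP E; apply/eqP; exact: val_inj.
Qed.

Lemma sum_eq1' n c0 : c0 < n -> \sum_(c < n) (c == c0 :> nat) = 1.
Proof. by move/(sum_eq1 true). Qed.

Section Corner.
Variables (k m : nat) (len : nat -> nat) (c0 : nat).
Hypothesis c0m : c0 < m.+1.
Hypothesis hpos : 0 < len c0.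
Hypothesis hk : len c0 <= k.
Hypothesis corner : forall j, c0 < j -> j < m.+1 -> len j < len c0.
Let r0 := (len c0).-1.
Lemma r0k : r0 < k. Proof. rewrite /r0; lia. Qed.

Definition Gc (f : nat -> nat -> bool) r c :=
  if c < c0 then f r c else if c == c0 then r == r0 else f r c.-1.

Lemma Gc_bump f r j : Gc f r (bump c0 j) = f r j.
Proof.
rewrite /Gc bumpE; case: (ltnP j c0) => h; first by rewrite h.
have -> : (j.+1 < c0) = false by lia.
by have -> : (j.+1 == c0) = false by lia.
Qed.

Lemma Gc_inv c : c != c0 -> c = bump c0 (if c < c0 then c else c.-1).
Proof. move=> h; rewrite bumpE; case: (ltnP c c0) => h1; first by rewrite h1.
have -> : (c.-1 < c0) = false by lia. lia.
Qed.

Let lenc j := len (bump c0 j).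

Lemma cd_fwd f : VN k m lenc f -> VN k m.+1 len (Gc f).
Proof.
case=> H1 H2 H3; split.
- move=> r c; case: (eqVneq c c0) => [->|/Gc_inv Ec].
  + rewrite /Gc ltnn eqxx => /eqP ->; rewrite r0k c0m /r0; lia.
  + move: (if _ then _ else _) Ec => j ->; rewrite Gc_bump => /H1/and3P[rk jm rl].
    rewrite rk /=; move: rl jm; rewrite /lenc bumpE; case: ifP => h0; lia.
- move=> c cm; case: (eqVneq c c0) => [->|/Gc_inv Ec].
  + by exists r0; rewrite ?r0k // /Gc ltnn !eqxx.
  + move: (if _ then _ else _) Ec cm => j -> cm.
    have jm : j < m by move: cm; rewrite bumpE; case: ifP => h0; lia.
    have [r rk fr] := H2 j jm.
    by exists r; rewrite // Gc_bump.
- move=> r c r' c' rk cm rl nG r'r Gr' c'c Grc'.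
  case: (eqVneq c c0) => [Ec|/Gc_inv Ec].
    move: Gr'; rewrite Ec /Gc ltnn eqxx => /eqP Er'; move: rl; rewrite Ec /r0; lia.
  move: (if _ then _ else _) Ec cm rl nG Gr' c'c => j -> cm rl.
  rewrite !Gc_bump => nG Gr' c'c.
  case: (eqVneq c' c0) => [Ec'|/Gc_inv Ec'].
    move: Grc'; rewrite Ec' /Gc ltnn eqxx => /eqP Er.
    move: c'c; rewrite Ec' => c'c.
    have := corner c'c cm; move: rl; rewrite Er /r0; lia.
  move: (if _ then _ else _) Ec' Grc' c'c => j' -> Grc' c'c; rewrite Gc_bump in Grc'.
  apply: (H3 r j r' j') => //.
  + move: cm; rewrite bumpE; case: ifP => h0; lia.
  + move: c'c; rewrite !bumpE; by case: ifP => h1; case: ifP => h2; lia.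
Qed.

Lemma cd_bwd f : VN k m.+1 len f -> f r0 c0 -> (forall r, r < r0 -> f r c0 = false) ->
  VN k m lenc (fun r j => f r (bump c0 j)) /\ (forall r c, Gc (fun r j => f r (bump c0 j)) r c = f r c).
Proof.
case=> H1 H2 H3 fx Z; split; first split.
- move=> r j /H1/and3P[rk cm rl]; rewrite rk rl andbT /=; move: cm; rewrite bumpE; case: ifP => h0; lia.
- move=> j jm; apply: H2; rewrite bumpE; case: ifP => h0; lia.
- move=> r j r' j' rk jm rl nf r'r f' j'j f''; apply: (H3 r (bump c0 j) r' (bump c0 j')) => //.
  + rewrite bumpE; case: ifP => h0; lia.
  + rewrite !bumpE; by case: ifP => h1; case: ifP => h2; lia.
- move=> r c; case: (eqVneq c c0) => [->|/Gc_inv Ec].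
  + rewrite /Gc ltnn eqxx; case: (eqVneq r r0) => [->|nr]; first by rewrite fx.
    case E: (f r c0) => //; have /and3P[_ _ rl] := H1 _ _ E.
    have : r < r0 by move: rl nr; rewrite /r0; lia.
    by move/Z; rewrite E.
  + move: (if _ then _ else _) Ec => j ->; by rewrite Gc_bump.
Qed.

Let ec (T' : {ffun 'I_k * 'I_m -> bool}) : {ffun 'I_k * 'I_m.+1 -> bool} := mk k m.+1 (Gc (tf T')).
Let rc (T : {ffun 'I_k * 'I_m.+1 -> bool}) : {ffun 'I_k * 'I_m -> bool} :=
  mk k m (fun r j => tf T r (bump c0 j)).

Lemma tf_ec T' r c : tf (ec T') r c = Gc (tf T') r c.
Proof.
rewrite tf_mk; case E: (Gc (tf T') r c); last by rewrite !andbF.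
case: (eqVneq c c0) => [Ec|/Gc_inv Ec].
  by move: E; rewrite Ec /Gc ltnn eqxx c0m => /eqP ->; rewrite r0k.
move: (if _ then _ else _) Ec E => j ->; rewrite Gc_bump => /tf_range[rk jm].
rewrite rk /= andbT bumpE; case: ifP => h0; lia.
Qed.

Lemma tf_rc T r j : tf (rc T) r j = tf T r (bump c0 j).
Proof.
rewrite tf_mk; case E: (tf T r (bump c0 j)); last by rewrite !andbF.
have [rk cm] := tf_range E; rewrite rk /= andbT; move: cm; rewrite bumpE; case: ifP => h0; lia.
Qed.

Lemma coldel :
  (\sum_(T : {ffun 'I_k * 'I_m.+1 -> bool} |
      (validg len T && tf T r0 c0) && ~~ [exists r : 'I_k, (r < r0)%N && tf T r c0])
     'X^(rankg T))%R = Zg k m lenc.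
Proof.
rewrite /Zg; apply: (@sum_bij _ _ _ _ _ _ _ ec rc).
- move=> T' /validP V; rewrite tf_ec /Gc ltnn !eqxx andbT; apply/andP; split.
  + apply/validP; apply: VN_ext (cd_fwd V) => r c; by rewrite tf_ec.
  + apply/existsP => -[r /andP[rr]]; rewrite tf_ec /Gc ltnn eqxx; move: rr; lia.
- move=> T /andP[/andP[/validP V fx] /existsP NE].
  have Z : forall r, r < r0 -> tf T r c0 = false.
    move=> r rr; apply/negP => E; apply: NE; exists (Ordinal (ltn_trans rr r0k)) => /=.
    by rewrite rr.
  have [V' E] := cd_bwd V fx Z.
  split; first by apply/validP; apply: VN_ext V' => r j; rewrite tf_rc.
  apply: tf_inj => r c; rewrite tf_ec -E /Gc; by rewrite !tf_rc.
- move=> T' _; apply: tf_inj => r j; by rewrite tf_rc tf_ec Gc_bump.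
- move=> T' _; rewrite /rankg !onesE /ones; congr ('X^_)%R.
  have -> : \sum_(i < k) \sum_(j < m.+1) tf (ec T') i j =
            \sum_(i < k) ((i == r0 :> nat) + \sum_(j < m) tf T' i j).
    apply: eq_bigr => i _.
    rewrite (@sum_bump _ _ _ m c0 (fun j => nat_of_bool (tf (ec T') i j)) c0m).
    rewrite tf_ec /Gc ltnn eqxx; congr (_ + _); apply: eq_bigr => j _; by rewrite tf_ec Gc_bump.
  rewrite big_split /= (sum_eq1' r0k); lia.
Qed.

Let lena j := if j == c0 then r0 else len j.
Definition Ga (f : nat -> nat -> bool) r c := f r c || (r == r0) && (c == c0).
Definition Fa (f : nat -> nat -> bool) r c := f r c && ~~ ((r == r0) && (c == c0)).

Lemma lena_le j : lena j <= len j.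
Proof. rewrite /lena; case: eqP => [->|_] //; rewrite /r0; lia. Qed.

Lemma ca_fwd f : VN k m.+1 lena f -> VN k m.+1 len (Ga f).
Proof.
case=> H1 H2 H3; split.
- move=> r c /orP[/H1/and3P[rk cm rl]|/andP[/eqP-> /eqP->]].
  + by rewrite rk cm (leq_trans rl (lena_le c)).
  + by rewrite r0k c0m /r0; lia.
- by move=> c /H2[r rk fr]; exists r; rewrite // /Ga fr.
- move=> r c r' c' rk cm rl; rewrite /Ga negb_or => /andP[nf nx] r'r /orP[Fr'|/andP[/eqP Er' /eqP Ec]]; last first.
    by move: r'r rl; rewrite Er' Ec /r0; lia.
  move=> c'c /orP[Frc'|/andP[/eqP Er /eqP Ec']]; last first.
    move: c'c; rewrite Ec' => c'c; have := corner c'c cm; move: rl; rewrite Er /r0; lia.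
  apply: (H3 r c r' c') => //; rewrite /lena; case: eqP => [Ec|//].
  by move: nx rl; rewrite Ec eqxx andbT /r0; lia.
Qed.

Lemma ca_bwd f : VN k m.+1 len f -> f r0 c0 -> (exists2 r, r < r0 & f r c0) ->
  VN k m.+1 lena (Fa f) /\ (forall r c, Ga (Fa f) r c = f r c).
Proof.
case=> H1 H2 H3 fx [r1 r1r fr1]; split; first split.
- move=> r c /andP[/H1/and3P[rk cm rl] nx]; rewrite rk cm /= /lena; case: eqP => [Ec|//].
  by move: nx rl; rewrite Ec eqxx andbT /r0; lia.
- move=> c cm; case: (eqVneq c c0) => [->|nc].
  + exists r1; first by move: r1r r0k; lia.
    by rewrite /Fa fr1 /=; move: r1r; lia.
  + have [r rk fr] := H2 c cm; exists r => //; by rewrite /Fa fr (negbTE nc) andbF.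
- move=> r c r' c' rk cm rl; rewrite /Fa => nF r'r /andP[f' _] c'c /andP[f'' _].
  apply: (H3 r c r' c') => //.
  + exact: leq_trans rl (lena_le c).
  + apply/negP => E; move: nF; rewrite E /=.
    case: (eqVneq c c0) rl => [->|nc] rl; last by rewrite andbF.
    rewrite /lena eqxx in rl; rewrite andbT => /negPn/eqP Er; move: rl; rewrite Er; lia.
- move=> r c; rewrite /Ga /Fa; case: (eqVneq r r0) => [->|]; case: (eqVneq c c0) => [->|] //=;
  rewrite ?andbT ?orbF ?fx ?orbT //.
Qed.

Let ea (T' : {ffun 'I_k * 'I_m.+1 -> bool}) : {ffun 'I_k * 'I_m.+1 -> bool} := mk k m.+1 (Ga (tf T')).
Let ra (T : {ffun 'I_k * 'I_m.+1 -> bool}) : {ffun 'I_k * 'I_m.+1 -> bool} := mk k m.+1 (Fa (tf T)).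

Lemma tf_ea T' r c : tf (ea T') r c = Ga (tf T') r c.
Proof.
rewrite tf_mk; case E: (Ga (tf T') r c); last by rewrite !andbF.
move: E; rewrite /Ga => /orP[/tf_range[-> ->]//|/andP[/eqP-> /eqP->]].
by rewrite r0k c0m.
Qed.

Lemma tf_ra T r c : tf (ra T) r c = Fa (tf T) r c.
Proof.
rewrite tf_mk; case E: (Fa (tf T) r c); last by rewrite !andbF.
by move: E; rewrite /Fa => /andP[/tf_range[-> ->]].
Qed.

Lemma cellrem :
  (\sum_(T : {ffun 'I_k * 'I_m.+1 -> bool} |
      (validg len T && tf T r0 c0) && [exists r : 'I_k, (r < r0)%N && tf T r c0])
     'X^(rankg T))%R = ('X * Zg k m.+1 lena)%R.
Proof.
rewrite /Zg big_distrr /=; apply: (@sum_bij _ _ _ _ _ _ _ ea ra).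
- move=> T' /validP V.
  have [H1 H2 H3] := V.
  rewrite tf_ea /Ga !eqxx orbT andbT; apply/andP; split.
  + apply/validP; apply: VN_ext (ca_fwd V) => r c; by rewrite tf_ea.
  + have [r rk fr] := H2 c0 c0m.
    have /and3P[_ _ rl] := H1 _ _ fr; move: rl; rewrite /lena eqxx => rr.
    apply/existsP; exists (Ordinal rk); by rewrite /= rr tf_ea /Ga fr.
- move=> T /andP[/andP[/validP V fx] /existsP[r1 /andP[r1r fr1]]].
  have ex : exists2 r, r < r0 & tf T r c0 by exists r1.
  have [V' E] := ca_bwd V fx ex.
  split; first by apply/validP; apply: VN_ext V' => r c; rewrite tf_ra.
  apply: tf_inj => r c; rewrite tf_ea -E /Ga /Fa; by rewrite !tf_ra.
- move=> T' /validP[H1 _ _]; apply: tf_inj => r c; rewrite tf_ra /Fa tf_ea /Ga.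
  case: (eqVneq r r0) => [->|]; case: (eqVneq c c0) => [->|] //=; rewrite ?andbT ?orbF ?andbT //.
  case E: (tf T' r0 c0) => //; have /and3P[_ _] := H1 _ _ E; by rewrite /lena eqxx ltnn.
- move=> T' /validP V; have := ones_ge V; rewrite /rankg !onesE /ones => ge.
  have -> : \sum_(i < k) \sum_(j < m.+1) tf (ea T') i j =
            \sum_(i < k) (\sum_(j < m.+1) tf T' i j + \sum_(j < m.+1) ((i == r0 :> nat) && (j == c0 :> nat))).
    apply: eq_bigr => i _; rewrite -big_split /=; apply: eq_bigr => j _; rewrite tf_ea /Ga.
    case: (eqVneq (i : nat) r0) => [Ei|]; case: (eqVneq (j : nat) c0) => [Ej|] //=; rewrite ?orbF ?addn0 //.
    have [H1 _ _] := V; case E: (tf T' i j) => //; have /and3P[_ _] := H1 _ _ E.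
    by rewrite /lena Ej eqxx Ei ltnn.
  rewrite big_split /=.
  have -> : (\sum_(i < k) \sum_(j < m.+1) ((i == r0 :> nat) && (j == c0 :> nat)) = 1)%N.
    rewrite (eq_bigr (fun i : 'I_k => nat_of_bool (i == r0 :> nat))); last by move=> i _; rewrite sum_eq1.
    exact: sum_eq1' r0k.
  have -> : (\sum_(i < k) \sum_(j < m.+1) tf T' i j + 1 - m.+1 = (\sum_(i < k) \sum_(j < m.+1) tf T' i j - m.+1).+1)%N by lia.
  by rewrite exprS.
Qed.
End Corner.


Lemma Zg_ext k m f g : (forall j, f j = g j) -> Zg k m f = Zg k m g.
Proof.
move=> E; rewrite /Zg; apply: eq_bigl => T.
have H : forall f g, (forall j, f j = g j) -> validg f T -> validg g T.
  move=> f1 g1 E1 /validP[H1 H2 H3]; apply/validP; split => //.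
  - by move=> r c; rewrite -E1; apply: H1.
  - by move=> r c r' c' rk cm; rewrite -E1; apply: H3.
by apply/idP/idP; apply: H.
Qed.

Lemma Zg_zero k m len c : c < m -> len c = 0 -> Zg k m len = 0%R.
Proof.
move=> cm l0; rewrite /Zg big_pred0 // => T; apply/negP => /validP[H1 H2 _].
have [r _ fr] := H2 c cm; have /and3P[_ _] := H1 _ _ fr; by rewrite l0.
Qed.

Lemma corner_rec k m len c0 : c0 < m.+1 -> 0 < len c0 -> len c0 <= k.+1 ->
  (forall j, c0 < j -> j < m.+1 -> len j < len c0) ->
  Zg k.+1 m.+1 len =
   ('X * Zg k.+1 m.+1 (fun j => if j == c0 then (len c0).-1 else len j)
    + Zg k.+1 m (fun j => len (bump c0 j)) + Zg k m.+1 (delrowf (len c0).-1 len))%R.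
Proof.
move=> c0m hpos hk corner.
rewrite {1}/Zg (bigID (fun T => tf T (len c0).-1 c0)) /=.
rewrite (bigID (fun T => [exists r : 'I_k.+1, (r < (len c0).-1)%N && tf T r c0])) /=.
rewrite (cellrem c0m hpos hk corner) (coldel c0m hpos hk corner).
congr (_ + _)%R.
have r0k : (len c0).-1 <= k by lia.
rewrite -(@rowdel k m.+1 len _ r0k); apply: eq_bigl => T.
case V: (validg len T) => //=; apply/idP/idP => [nx|/forallP Z]; last first.
  by have := Z (Ordinal c0m).
apply/forallP => j; apply/negP => Tj.
have [H1 H2 H3] := (validP len T).1 V.
have /and3P[_ jm rl] := H1 _ _ Tj.
case: (ltngtP j c0) => hj.
- have [r rk fr] := H2 c0 c0m.
  have /and3P[_ _ rl0] := H1 _ _ fr.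
  have rr : r < (len c0).-1.
    case: (eqVneq r (len c0).-1) => [Er|nr]; last by move: rl0 nr; lia.
    by move: nx fr; rewrite Er => /negbTE ->.
  apply: (H3 (len c0).-1 c0 r j) => //; try lia.
- have := corner _ hj jm; move: rl; lia.
- by move: nx Tj; rewrite hj => /negbTE ->.
Qed.


Fixpoint clr (K : nat) (s : seq nat) : seq nat :=
  if s is i :: J then nseq i.-1 K ++ clr K.-1 J else [::].

Lemma colLens_gen K I :
  flatten [seq nseq (nth 0 I t).-1 (K - t) | t <- iota 0 (size I)] = clr K I.
Proof.
elim: I K => [|i J IH] K //=; rewrite subn0 -(IH K.-1); congr (_ ++ _).
rewrite -[1]/(1 + 0) iotaDl -map_comp; congr flatten; apply: eq_map => t /=.
by congr nseq; lia.
Qed.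

Lemma colLensE I : colLens I = clr (size I) I.
Proof. exact: colLens_gen. Qed.

Lemma clr_cat K J L : clr K (J ++ L) = clr K J ++ clr (K - size J) L.
Proof.
elim: J K => [|i J IH] K /=; first by rewrite subn0.
by rewrite IH catA; congr (_ ++ clr _ _); lia.
Qed.

Lemma clr_le K L x : x \in clr K L -> x <= K.
Proof.
elim: L K => [|i L IH] K //=; rewrite mem_cat => /orP[/nseqP[-> _]//|/IH]; lia.
Qed.

Lemma clr_gt K J x : size J <= K -> x \in clr K J -> K - size J < x.
Proof.
elim: J K => [|i J IH] K //= sJ; rewrite mem_cat => /orP[/nseqP[-> _]|/IH]; lia.
Qed.

Lemma map_pred_clr K J : map predn (clr K J) = clr K.-1 J.
Proof. elim: J K => [|i J IH] K //=; by rewrite map_cat map_nseq IH. Qed.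

Lemma nth_map0 (f : nat -> nat) s j : f 0 = 0 -> nth 0 (map f s) j = f (nth 0 s j).
Proof.
move=> f0; case: (ltnP j (size s)) => h; first exact: nth_map.
by rewrite !nth_default ?size_map.
Qed.

Lemma nth_mid (A B : seq nat) x y j :
  nth 0 (A ++ x :: B) j = if j == size A then x else nth 0 (A ++ y :: B) j.
Proof.
rewrite !nth_cat; case: (ltngtP j (size A)) => h //=.
- by have -> : j - size A = (j - size A).-1.+1 by lia.
- by rewrite h subnn.
Qed.

Lemma nth_bump (A B : seq nat) x j : nth 0 (A ++ x :: B) (bump (size A) j) = nth 0 (A ++ B) j.
Proof.
rewrite !nth_cat bumpE; case: (ltnP j (size A)) => h; first by rewrite h.
have -> : (j.+1 < size A) = false by lia.
by rewrite subSn.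
Qed.

Lemma step_gen (J K : seq nat) (a N : nat) :
  0 < a -> size J < N ->
  let h := N - size J in
  let L := clr N J ++ nseq a h ++ clr h.-1 K in
  Zg N (size L) (nth 0 L) =
    ('X * Zg N (size L) (nth 0 (clr N J ++ nseq a.-1 h ++ h.-1 :: clr h.-1 K))
     + Zg N (size L).-1 (nth 0 (clr N J ++ nseq a.-1 h ++ clr h.-1 K))
     + Zg N.-1 (size L) (delrowf h.-1 (nth 0 L)))%R.
Proof.
move=> a0 JN h L.
have hpos : 0 < h by rewrite /h; lia.
set A := clr N J ++ nseq a.-1 h; set B := clr h.-1 K.
have EL : L = A ++ h :: B.
  rewrite /L /A -catA; congr (_ ++ _); case: (a) a0 => // a' _.
  by elim: a' => [|a' IH] //=; rewrite -IH.
have E1 : clr N J ++ nseq a.-1 h ++ h.-1 :: B = A ++ h.-1 :: B by rewrite /A -catA.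
have E0 : clr N J ++ nseq a.-1 h ++ B = A ++ B by rewrite /A -catA.
rewrite E1 E0 EL size_cat /= addnS /=.
have [N' EN] : exists N', N = N'.+1 by exists N.-1; lia.
subst N => /=.
have c0m : size A < (size A + size B).+1 by lia.
have lc0 : nth 0 (A ++ h :: B) (size A) = h by rewrite nth_cat ltnn subnn.
have corner : forall j, size A < j -> j < (size A + size B).+1 -> nth 0 (A ++ h :: B) j < h.
  move=> j j1 j2; rewrite nth_cat.
  have -> : (j < size A) = false by lia.
  have -> : j - size A = (j - size A).-1.+1 by lia.
  rewrite /=; case: (ltnP (j - size A).-1 (size B)) => hb; last by rewrite nth_default.
  have := clr_le (mem_nth 0 hb).
  move=> H; by rewrite (leq_ltn_trans H) // ltn_predL.
have hk : h <= N'.+1 by rewrite /h leq_subr.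
have CR := @corner_rec N' (size A + size B) (nth 0 (A ++ h :: B)) (size A) c0m.
rewrite lc0 in CR; rewrite CR //.
congr (_ * _ + _ + _)%R.
- apply: Zg_ext => j; by rewrite [RHS](nth_mid _ _ _ h).
- by apply: Zg_ext => j; rewrite nth_bump.
Qed.

Lemma PT_clr X : PT X = Zg (size X) (size (clr (size X) X)) (nth 0 (clr (size X) X)).
Proof. by rewrite PT_Zg /nrows /ncols colLensE. Qed.

Section Main.
Variable I : seq nat.
Hypothesis cI : composition I.

Lemma posI t : t < size I -> 0 < nth 0 I t.
Proof. by move=> tn; move/all_nthP: cI; apply. Qed.

Definition Pt t := PT (take t I ++ (nth 0 I t).+1 :: drop t.+1 I).

Lemma decompI t : t < size I -> I = take t I ++ nth 0 I t :: drop t.+1 I.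
Proof. by move=> tn; rewrite -drop_nth // cat_take_drop. Qed.

Lemma Pt_step t : t < size I ->
  let J := take t I in let a := nth 0 I t in let K := drop t.+1 I in
  let h := size I - t in let L := clr (size I) J ++ nseq a h ++ clr h.-1 K in
  Pt t = ('X * Zg (size I) (size L) (nth 0 (clr (size I) J ++ nseq a.-1 h ++ h.-1 :: clr h.-1 K))
     + PT I + Zg (size I).-1 (size L) (delrowf h.-1 (nth 0 L)))%R.
Proof.
move=> tn J a K h L.
have sJ : size J = t by rewrite /J size_takel // ltnW.
have EI := decompI tn.
have a0 : 0 < a by exact: posI.
have sX : size (J ++ a.+1 :: K) = size I by rewrite [in RHS]EI !size_cat.
have EX : clr (size I) (J ++ a.+1 :: K) = L by rewrite clr_cat sJ /L /h.
rewrite /Pt -/J -/a -/K PT_clr sX EX.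
have JN : size J < size I by rewrite sJ.
have := step_gen K a0 JN; rewrite sJ -/h -/L => ->.
congr (_ + _ + _)%R.
have EI' : clr (size I) I = clr (size I) J ++ nseq a.-1 h ++ clr h.-1 K.
  rewrite -[nseq a.-1 h ++ _]/(clr h (a :: K)) /h -sJ -clr_cat.
  by congr (clr _ _); exact: EI.
rewrite [in RHS]PT_clr EI'; congr (Zg _ _ _).
rewrite /L !size_cat !size_nseq; lia.
Qed.

Lemma rec_last : 0 < size I -> Pt (size I).-1 = PT I.
Proof.
move=> n0; have tn : (size I).-1 < size I by lia.
rewrite (Pt_step tn).
set J := take _ I; set a := nth 0 I _; set K := drop _ I.
have K0 : K = [::] by rewrite /K drop_oversize //; lia.
have h1 : size I - (size I).-1 = 1 by lia.
have a0 : 0 < a by exact: posI.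
rewrite K0 h1 /=.
set c0 := size (clr (size I) J) + a.-1.
have c0L : c0 < size (clr (size I) J ++ nseq a 1 ++ [::]) by rewrite !size_cat size_nseq /c0; lia.
rewrite (@Zg_zero _ _ _ c0) //; last first.
  rewrite nth_cat /c0 ltnNge leq_addr /= addKn nth_cat size_nseq.
  by rewrite ltnn subnn.
rewrite (@Zg_zero _ _ (delrowf 0 _) c0) //; last first.
  have E1 : nth 0 (clr (size I) J ++ nseq a 1 ++ [::]) c0 = 1.
    rewrite cats0 nth_cat /c0.
    have -> : (size (clr (size I) J) + a.-1 < size (clr (size I) J)) = false by lia.
    rewrite addKn nth_nseq; by have -> : a.-1 < a by lia.
  by rewrite /delrowf E1.
by rewrite mulr0 add0r addr0.
Qed.

Lemma rec_step t : t.+1 < size I ->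
  Pt t = ('X * Pt t.+1 + PT I + PT (mergeAt I t))%R.
Proof.
move=> t1n; have tn : t < size I by lia.
rewrite (Pt_step tn).
set J := take _ I; set a := nth 0 I _; set K := drop _ I; set h := size I - t.
set b := nth 0 I t.+1; set K' := drop t.+2 I.
have EK : K = b :: K' by rewrite /K (drop_nth 0).
have a0 : 0 < a by exact: posI.
have b0 : 0 < b by exact: posI.
have sJ : size J = t by rewrite /J size_takel // ltnW.
have h2 : 1 < h by rewrite /h; lia.
have ES : clr h.-1 K = nseq b.-1 h.-1 ++ clr h.-2 K' by rewrite EK.
congr (_ * _ + _ + _)%R.
- rewrite /Pt PT_clr.
  have EJ1 : take t.+1 I = J ++ [:: a].
    by rewrite (take_nth 0) // -cats1.
  have sX : size (take t.+1 I ++ (nth 0 I t.+1).+1 :: drop t.+2 I) = size I.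
    by rewrite [in RHS](decompI tn) -/J -/a -/K EK EJ1 -catA /= !size_cat /=.
  rewrite sX EJ1 -/b -/K' clr_cat clr_cat.
  have -> : size I - size (J ++ [:: a]) = h.-1 by rewrite size_cat sJ /h /=; lia.
  rewrite sJ -/h /=.
  have EM : clr (size I) J ++ nseq a.-1 h ++ h.-1 :: clr h.-1 K =
            (clr (size I) J ++ nseq a.-1 h ++ [::]) ++ nseq b h.-1 ++ clr h.-1.-1 K'.
    rewrite ES cats0 -!catA; congr (_ ++ _ ++ _).
    by rewrite -[in RHS](prednK b0).
  rewrite EM; congr (Zg _ _ _).
  rewrite ES !size_cat !size_nseq /=; lia.
- rewrite /mergeAt PT_clr -/J -/a -/b -/K'.
  have sM : size (J ++ (a + b) :: K') = (size I).-1.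
    by rewrite (decompI tn) -/J -/a -/K EK !size_cat /=; lia.
  rewrite sM clr_cat sJ /=.
  have -> : (size I).-1 - t = h.-1 by rewrite /h; lia.
  have Ed : forall (L : seq nat) j, delrowf h.-1 (nth 0 L) j = nth 0 (map (fun x => if h.-1 < x then x.-1 else x) L) j.
    move=> L j; by rewrite nth_map0.
  set L := clr (size I) J ++ nseq a h ++ clr h.-1 K.
  have EL : map (fun x => if h.-1 < x then x.-1 else x) L =
            clr (size I).-1 J ++ nseq (a + b).-1 h.-1 ++ clr h.-1.-1 K'.
    rewrite /L ES !map_cat; congr (_ ++ _).
    + rewrite -map_pred_clr; apply/eq_in_map => x xin.
      have := clr_gt _ xin; rewrite sJ /h => /(_ (ltnW tn)) xg.
      by have -> : (size I - t).-1 < x by lia.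
    + rewrite !map_nseq; have -> : (h.-1 < h) = true by lia. rewrite ltnn catA -nseqD.
      congr (_ ++ _); first by congr nseq; lia.
      rewrite -[in RHS](map_id (clr _ K')); apply/eq_in_map => x /clr_le xle.
      by have -> : (h.-1 < x) = false by lia.
  have -> : size L = size (clr (size I).-1 J ++ nseq (a + b).-1 h.-1 ++ clr h.-1.-1 K')
    by rewrite -EL size_map.
  apply: Zg_ext => j; by rewrite Ed EL.
Qed.
End Main.


Lemma unroll I : composition I -> 0 < size I -> forall d t, t + d = (size I).-1 ->
  Pt I t = (\sum_(j < d.+1) 'X^j * PT I + \sum_(j < d) 'X^j * PT (mergeAt I (t + j)))%R.
Proof.
move=> cI n0; elim=> [|d IH] t E.
- rewrite addn0 in E; rewrite E rec_last //.
  by rewrite big_ord1 big_ord0 expr0 mul1r addr0.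
- have t1 : t.+1 < size I by move: E; case: (size I) => //= n; lia.
  rewrite rec_step // (IH t.+1) ?addSnnS //.
  rewrite [(\sum_(j < d.+2) _)%R]big_ord_recl [(\sum_(j < d.+1) ('X^j * PT (mergeAt I (t + j))))%R]big_ord_recl /=.
  rewrite expr0 !mul1r addn0 mulrDr !mulr_sumr.
  have E1 : (\sum_(i < d.+1) 'X * ('X^i * PT I) = \sum_(i < d.+1) 'X^(bump 0 i) * PT I)%R.
    by apply: eq_bigr => i _; rewrite /bump add1n exprS mulrA.
  have E2 : (\sum_(i < d) 'X * ('X^i * PT (mergeAt I (t.+1 + i))) =
             \sum_(i < d) 'X^(bump 0 i) * PT (mergeAt I (t + bump 0 i)))%R.
    by apply: eq_bigr => i _; rewrite /bump add1n exprS mulrA addSnnS.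
  rewrite E1 E2; ring.
Qed.

Lemma PT_cons1 I : PT (1%N :: I) = PT I.
Proof.
rewrite !PT_clr /=.
set L := clr (size I) I; set n := size I.
transitivity (Zg n (size L) (delrowf n (nth 0 L))); last first.
  apply: Zg_ext => j; rewrite /delrowf; case: ifP => // h.
  have : nth 0 L j <= n.
    case: (ltnP j (size L)) => hj; last by rewrite nth_default.
    exact: clr_le (mem_nth 0 hj).
  lia.
rewrite -(@rowdel n (size L) (nth 0 L) n (leqnn n)).
rewrite /Zg; apply: eq_bigl => T; case V: (validg _ T) => //=.
apply/esym/forallP => j; apply/negP => Tj.
have [H1 _ _] := (validP _ T).1 V; have /and3P[_ _ rl] := H1 _ _ Tj.
have : nth 0 L j <= n.
  case: (ltnP j (size L)) => hj; last by rewrite nth_default.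
  exact: clr_le (mem_nth 0 hj).
lia.
Qed.

Theorem mainTheorem13 (I : seq nat) :
  I != [::] -> composition I ->
  PT (1%N :: I) = PT I /\
  PT ((1 + head 0 I)%N :: behead I) =
    (qint (size I) * PT I + \sum_(j < (size I).-1) 'X^j * PT (mergeAt I j))%R.
Proof.
move=> nI cI; split; first exact: PT_cons1.
have n0 : 0 < size I by move: nI; case: (I).
have -> : PT ((1 + head 0 I)%N :: behead I) = Pt I 0.
  by rewrite /Pt take0 /= add1n drop1 nth0.
rewrite (@unroll I cI n0 (size I).-1 0) //.
rewrite prednK // /qint mulr_suml.
by under [X in (_ + X)%R = _]eq_bigr do rewrite add0n.
Qed.
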